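(* In the setting of the context, let $P\in\mathbb P^1$ with $\phi(P)=([1:x_1],[1:y_1])$, $x_1,y_1\in\overline{\mathbb F(t)}$, let $(i,j)=v(P)$ and $\delta=|i-j|$. (1) If $i<j<0$, then $v(\sigma^k(P))=(i-2\delta k,\,j-2\delta k)$ for all $k\ge0$. (2) If $j<i<0$, then $v(\sigma^{-k}(P))=(i-2\delta k,\,j-2\delta k)$ for all $k\ge0$.
   Context: Consider a genus-zero weighted quadrant walk model: step set $\mathcal S\subseteq\{(1,-1),(-1,1),(1,0),(0,1),(1,1)\}$ one of the five genus-zero sets (always containing $(1,-1)$ and $(-1,1)$), weights $d_{i,j}>0$ on $\mathcal S$ ($d_{i,j}=0$ off $\mathcal S$), Boltzmann weights $a,b>0$, $\mathbb F=\mathbb Q((d_{i,j}),a,b)$, and a fixed real $t$ transcendental over $\mathbb F$. $\phi:s\mapsto(x(s),y(s))$ is a fixed rational parametrization from $\mathbb P^1$ onto the closure $\overline{E_t}\subset\mathbb P^1\times\mathbb P^1$ of $\{xy(1-t\sum d_{i,j}x^iy^j)=0\}$, and $\sigma(s)=qs$ (for a fixed real $q$) satisfies $\phi(\sigma(s))=\iota_2(\iota_1(\phi(s)))$, where the involutions of $\overline{E_t}$ are given in homogeneous coordinates by $\iota_1([1:x_1],[1:y_1])=\big([1:x_1],\big[1:\tfrac{d_{-1,1}x_1^2+d_{0,1}x_1+d_{1,1}}{d_{1,-1}y_1}\big]\big)$ and $\iota_2([1:x_1],[1:y_1])=\big(\big[1:\tfrac{d_{1,-1}y_1^2+d_{1,0}y_1+d_{1,1}}{d_{-1,1}x_1}\big],[1:y_1]\big)$.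 Fix an embedding $\psi$ of $\overline{\mathbb F(t)}$ into the field of formal Puiseux series $\mathbb C^{frac}((T))$ extending $t\mapsto T$ and the inclusion $\mathbb F\subset\mathbb C$; for $u\in\overline{\mathbb F(t)}$, $v(u)\in\mathbb Q\cup\{+\infty\}$ is the $T$-valuation of $\psi(u)$. For $P\in\mathbb P^1\setminus\{0,\infty\}$ with $\phi(P)=([1:x_1],[1:y_1])$, $x_1,y_1\in\overline{\mathbb F(t)}$, its bivaluation is $v(P)=(v(x_1),v(y_1))$. *)

(* Defs.v *)
From HB Require Import structures.
From mathcomp Require Import all_boot all_order all_algebra all_field.
Set Implicit Arguments. Unset Strict Implicit. Unset Printing Implicit Defensive.
Import Order.TTheory GRing.Theory Num.Theory.
Local Open Scope ring_scope.

(* Points of P^1 over K in the chart used by the paper: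
   [Some x1] stands for the homogeneous point [1:x1], [None] for [0:1]. *)
Definition P1 (K : Type) := option K.

(* A (rank one, Q-valued) valuation on K: [None] = +infinity.
   This abstracts u |-> T-valuation of psi(u) for the embedding
   psi : \overline{F(t)} -> C^frac((T)). *)
Definition is_valuation (K : fieldType) (v : K -> option rat) : Prop :=
  (forall x, v x = None <-> x = 0) /\
  (forall x y a b, v x = Some a -> v y = Some b -> v (x * y) = Some (a + b)) /\
  (forall x y a b, v x = Some a -> v y = Some b -> x + y != 0 ->
     exists c, v (x + y) = Some c /\ Num.min a b <= c).

Definition iota1_y (K : fieldType) (d1m1 dm11 d01 d11 : K) (x1 y1 : K) : K :=
  (dm11 * x1 ^+ 2 + d01 * x1 + d11) / (d1m1 * y1).

Definition iota2_x (K : fieldType) (d1m1 dm11 d10 d11 : K) (x1 y1 : K) : K :=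
  (d1m1 * y1 ^+ 2 + d10 * y1 + d11) / (dm11 * x1).

(* Main.v *)
Require Import Defs.
From HB Require Import structures.
From mathcomp Require Import all_boot all_order all_algebra all_field.
Import Order.TTheory GRing.Theory Num.Theory.
Local Open Scope ring_scope.

From mathcomp Require Import lra ring.

Ltac vlra := repeat match goal with H : ?T |- _ => match T with
  | @eq (option _) _ _ => clear H | is_true (_ != _) => clear H end end; lra.
Set Implicit Arguments. Unset Strict Implicit.
Section Val.
Variables (K : fieldType) (v : K -> option rat).
Hypothesis hv : is_valuation v.

Lemma vS_neq0 x a : v x = Some a -> x != 0.
Proof. move=> h; apply/eqP=> x0; have := (proj1 hv x).2 x0; by rewrite h. Qed.

Lemma vM x y a b : v x = Some a -> v y = Some b -> v (x * y) = Some (a + b).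
Proof. exact: (proj1 (proj2 hv)). Qed.

Lemma vS_eq x a b : v x = Some a -> a = b -> v x = Some b.
Proof. by move=> h <-. Qed.

Lemma v_neq0 x : x != 0 -> exists a, v x = Some a.
Proof.
move=> hx; case E: (v x) => [a|]; first by exists a.
by move: hx; rewrite ((proj1 hv x).1 E) eqxx.
Qed.

Lemma v1 : v 1 = Some 0.
Proof.
have [a ha] := @v_neq0 1 (oner_neq0 K).
have := vM ha ha; rewrite mulr1 ha => -[e].
have -> : a = 0 by vlra. done.
Qed.

Lemma vN x a : v x = Some a -> v (- x) = Some a.
Proof.
move=> h.
have n1 : (-1 : K) != 0 by rewrite oppr_eq0 oner_neq0.
have [b hb] := v_neq0 n1.
have := vM hb hb; rewrite mulrNN mulr1 v1 => -[e].
have b0 : b = 0 by vlra.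
have := vM hb h; rewrite mulN1r b0 add0r; done.
Qed.

Lemma vV x a : v x = Some a -> v x^-1 = Some (- a).
Proof.
move=> h; have x0 := vS_neq0 h.
have [b hb] := v_neq0 (invr_neq0 x0).
have := vM h hb; rewrite mulfV // v1 => -[e].
rewrite hb; congr Some; vlra.
Qed.

Lemma vD_lt x y a b : v x = Some a -> v y = Some b -> a < b -> v (x + y) = Some a.
Proof.
move=> hx hy ab.
have s0 : x + y != 0.
  apply/eqP=> e; have : y = - x by apply/eqP; rewrite -subr_eq0 opprK addrC e.
  move=> ey; move: hy; rewrite ey (vN hx) => -[ba]; by move: ab; rewrite ba ltxx.
have [c [hc hm]] := (proj2 (proj2 hv)) x y a b hx hy s0.
have ha : Num.min a b = a by apply/min_idPl; vlra.
rewrite ha in hm.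
have [ca|ac] := lerP c a; first by rewrite hc; congr Some; vlra.
have := (proj2 (proj2 hv)) (x + y) (- y) c b hc (vN hy).
rewrite addrK => /(_ (vS_neq0 hx)) [c' [hc' hm']].
rewrite hx in hc'; case: hc' => ec; subst c'.
exfalso; by move: hm'; rewrite ge_min => /orP[]; vlra.
Qed.

Lemma vquad a b c z e :
  v a = Some 0 -> (b = 0 \/ v b = Some 0) -> (c = 0 \/ v c = Some 0) ->
  v z = Some e -> e < 0 -> v (a * z ^+ 2 + b * z + c) = Some (e + e).
Proof.
move=> ha hb hc hz e0.
have h2 : v (a * z ^+ 2) = Some (e + e).
  by rewrite expr2; apply: vS_eq (vM ha (vM hz hz)) _; vlra.
have h3 : v (a * z ^+ 2 + b * z) = Some (e + e).
  case: hb => [->|hb]; first by rewrite mul0r addr0.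
  by apply: vD_lt h2 (vM hb hz) _; vlra.
case: hc => [->|hc]; first by rewrite addr0.
by apply: vD_lt h3 hc _; vlra.
Qed.

Lemma vquad_div a b c d z w e f :
  v a = Some 0 -> (b = 0 \/ v b = Some 0) -> (c = 0 \/ v c = Some 0) ->
  v d = Some 0 -> v z = Some e -> e < 0 -> v w = Some f ->
  v ((a * z ^+ 2 + b * z + c) / (d * w)) = Some (e + e - f).
Proof.
move=> ha hb hc hd hz e0 hw.
apply: vS_eq (vM (vquad ha hb hc hz e0) (vV (vM hd hw))) _; vlra.
Qed.

End Val.
Unset Implicit Arguments. Set Strict Implicit.

Theorem lemma4p5
  (K : closedFieldType) (v : K -> option rat)
  (d1m1 dm11 d10 d01 d11 : K)
  (S : Type) (phi : S -> P1 K * P1 K) (sigma sigmainv : S -> S)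
  (iota1 iota2 : P1 K * P1 K -> P1 K * P1 K) :
  is_valuation v ->
  (* weights: d_{1,-1}, d_{-1,1} nonzero constants; the others are 0 or nonzero constants *)
  d1m1 != 0 -> v d1m1 = Some 0 ->
  dm11 != 0 -> v dm11 = Some 0 ->
  (d10 = 0 \/ v d10 = Some 0) ->
  (d01 = 0 \/ v d01 = Some 0) ->
  (d11 = 0 \/ v d11 = Some 0) ->
  (* sigma is an automorphism of P^1 *)
  cancel sigma sigmainv -> cancel sigmainv sigma ->
  (* phi o sigma = iota2 o iota1 o phi *)
  (forall s, phi (sigma s) = iota2 (iota1 (phi s))) ->
  (* iota1, iota2 are involutions of the curve phi(P^1) *)
  (forall s, iota1 (iota1 (phi s)) = phi s /\ exists s', iota1 (phi s) = phi s') ->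
  (forall s, iota2 (iota2 (phi s)) = phi s /\ exists s', iota2 (phi s) = phi s') ->
  (* explicit formulas for the involutions in homogeneous coordinates *)
  (forall s x1 y1, phi s = (Some x1, Some y1) -> y1 != 0 ->
     iota1 (phi s) = (Some x1, Some (iota1_y d1m1 dm11 d01 d11 x1 y1))) ->
  (forall s x1 y1, phi s = (Some x1, Some y1) -> x1 != 0 ->
     iota2 (phi s) = (Some (iota2_x d1m1 dm11 d10 d11 x1 y1), Some y1)) ->
  forall (P : S) (x1 y1 : K) (i j : rat),
    phi P = (Some x1, Some y1) -> v x1 = Some i -> v y1 = Some j ->
    (i < j < 0 -> forall k : nat, exists x y : K,
        phi (iter k sigma P) = (Some x, Some y) /\
        v x = Some (i - 2 * `|i - j| * k%:R) /\
        v y = Some (j - 2 * `|i - j| * k%:R)) /\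
    (j < i < 0 -> forall k : nat, exists x y : K,
        phi (iter k sigmainv P) = (Some x, Some y) /\
        v x = Some (i - 2 * `|i - j| * k%:R) /\
        v y = Some (j - 2 * `|i - j| * k%:R)).
Proof.
Proof.
move=> hv hd1 vd1 hd2 vd2 h10 h01 h11 sK sK' hsig hinv1 hinv2 hi1 hi2 P x1 y1 i j hP hx hy.
have step1 : forall s x y a b, phi s = (Some x, Some y) -> v x = Some a -> v y = Some b ->
    a < b -> b < 0 -> exists x' y', phi (sigma s) = (Some x', Some y') /\
    v x' = Some (3 * a - 2 * b) /\ v y' = Some (2 * a - b).
  move=> s x y a b hs va vb ab b0.
  have y0 := vS_neq0 hv vb; have x0 := vS_neq0 hv va.
  have e1 := hi1 s x y hs y0.
  have [_ [s' hs']] := hinv1 s.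
  have e2 := hi2 s' x (iota1_y d1m1 dm11 d01 d11 x y) ltac:(by rewrite -hs' e1) x0.
  have vy' : v (iota1_y d1m1 dm11 d01 d11 x y) = Some (2 * a - b).
    apply: vS_eq (vquad_div hv vd2 h01 h11 vd1 va _ vb) _; first by vlra.
    by vlra.
  eexists; eexists; split; first by rewrite hsig hs' e2.
  split; last exact: vy'.
  apply: vS_eq (vquad_div hv vd1 h10 h11 vd2 vy' _ va) _; first by vlra.
  by vlra.
have step2 : forall s x y a b, phi s = (Some x, Some y) -> v x = Some a -> v y = Some b ->
    b < a -> a < 0 -> exists x' y', phi (sigmainv s) = (Some x', Some y') /\
    v x' = Some (2 * b - a) /\ v y' = Some (3 * b - 2 * a).
  move=> s x y a b hs va vb ab b0.
  have y0 := vS_neq0 hv vb; have x0 := vS_neq0 hv va.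
  have e2 := hi2 s x y hs x0.
  have [_ [s' hs']] := hinv2 s.
  have e1 := hi1 s' (iota2_x d1m1 dm11 d10 d11 x y) y ltac:(by rewrite -hs' e2) y0.
  have vx' : v (iota2_x d1m1 dm11 d10 d11 x y) = Some (2 * b - a).
    apply: vS_eq (vquad_div hv vd1 h10 h11 vd2 vb _ va) _; first by vlra.
    by vlra.
  have hback : phi (sigmainv s) = iota1 (iota2 (phi s)).
    have [hh _] := hinv2 (sigmainv s).
    have [hh1 [s'' hs'']] := hinv1 (sigmainv s).
    rewrite -{2}(sK' s) hsig hs'' (proj1 (hinv2 s'')) -hs'' hh1 //.
  eexists; eexists; split; first by rewrite hback hs' e1.
  split; first exact: vx'.
  apply: vS_eq (vquad_div hv vd2 h01 h11 vd1 vx' _ vb) _; first by vlra.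
  by vlra.
split.
- move=> /andP[ij j0].
  have hd : `|i - j| = j - i by rewrite ler0_norm; vlra.
  rewrite hd.
  elim=> [|k [x [y [hk [vx vy]]]]].
    by exists x1, y1; rewrite hP /= !mulr0 !subr0.
  have hk0 : 0 <= (j - i) * k%:R by apply: mulr_ge0; [vlra | exact: ler0n].
  have [x' [y' [h1 [h2 h3]]]] := step1 _ _ _ _ _ hk vx vy ltac:(vlra) ltac:(vlra).
  exists x', y'; rewrite iterS h1; split => //.
  by split; [apply: vS_eq h2 _|apply: vS_eq h3 _]; rewrite -addn1 natrD; ring.
- move=> /andP[ji i0].
  have hd : `|i - j| = i - j by rewrite ger0_norm; vlra.
  rewrite hd.
  elim=> [|k [x [y [hk [vx vy]]]]].
    by exists x1, y1; rewrite hP /= !mulr0 !subr0.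
  have hk0 : 0 <= (i - j) * k%:R by apply: mulr_ge0; [vlra | exact: ler0n].
  have [x' [y' [h1 [h2 h3]]]] := step2 _ _ _ _ _ hk vx vy ltac:(vlra) ltac:(vlra).
  exists x', y'; rewrite iterS h1; split => //.
  by split; [apply: vS_eq h2 _|apply: vS_eq h3 _]; rewrite -addn1 natrD; ring.
Qed.
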